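(* Let $n\ge1$ and let $\alpha$ be a composition with $\bm{l}(\alpha)\le n$. Write $M_\alpha=\sum_\gamma\tilde K_{\alpha,\gamma}\,\mathcal{S}_\gamma$ in $\mathit{QSym}_n$, the sum over compositions $\gamma$ with $\bm{l}(\gamma)\le n$ (the $\mathcal{S}_\gamma$ with $\bm{l}(\gamma)\le n$ form a basis of $\mathit{QSym}_n$). Then $\tilde K_{\alpha,\alpha}=1$, and $\tilde K_{\alpha,\gamma}=0$ whenever $\alpha\prec\gamma$.
   Context: Let $\mathbf{x}=\{x_1,\dots,x_n\}$. A composition is a finite sequence $\alpha=(\alpha_1,\dots,\alpha_k)$ of positive integers with length $\bm{l}(\alpha)=k$. $\mathit{QSym}_n$ is the ring of quasisymmetric polynomials in $\mathbf{x}$ over $\mathbb{Q}$: those $f$ such that for every composition $(\alpha_1,\dots,\alpha_k)$ with $k\le n$ the coefficient of $x_1^{\alpha_1}\cdots x_k^{\alpha_k}$ equals that of $x_{i_1}^{\alpha_1}\cdots x_{i_k}^{\alpha_k}$ for all $i_1<\dots<i_k$. $M_\alpha=\sum_{1\le i_1<\dots<i_k\le n}x_{i_1}^{\alpha_1}\cdots x_{i_k}^{\alpha_k}$. Composition tableaux: the diagram of $\alpha$ has $\alpha_i$ cells in row $i$ (from the top, cells $(i,j)$ in matrix notation); a composition tableau of shape $\alpha$ is a filling $T$ by positive integers with (CT1) rows weakly decreasing left to right; (CT2) leftmost column strictly increasing top to bottom; (CT3) for cells $(i,k),(j,k)$ of the diagram with $i<j$: if $\alpha_i\ge\alpha_j$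 (and $k\ge2$) then $T(j,k)<T(i,k)$ or $T(i,k-1)<T(j,k)$; if $\alpha_i<\alpha_j$ then $T(j,k)<T(i,k)$ or $T(i,k)<T(j,k+1)$. With $x^T=\prod_i x_i^{\#\{\text{entries equal to }i\}}$, the quasisymmetric Schur polynomial is $\mathcal{S}_\alpha(x_1,\dots,x_n)=\sum_T x^T$ over composition tableaux of shape $\alpha$ with entries in $\{1,\dots,n\}$. Revlex order: $\bm\lambda(\alpha)$ is the partition obtained by sorting the parts of $\alpha$ decreasingly; partitions are compared lexicographically ($\lambda>_{\mathrm{lex}}\mu$ iff the first nonzero entry of $\lambda-\mu$ is positive). For compositions $\alpha,\gamma$ of the same size, $\alpha\succ\gamma$ iff either $\bm\lambda(\alpha)>_{\mathrm{lex}}\bm\lambda(\gamma)$, or $\bm\lambda(\alpha)=\bm\lambda(\gamma)$ and $\alpha$ is lexicographically larger than $\gamma$ when both are read from right to left; $\alpha\prec\gamma$ means $\gamma\succ\alpha$. (E.g. $4\succ13\succ31\succ22\succ112\succ121\succ211\succ1111$.) *)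

(* Defs.v *)
From mathcomp Require Import all_boot all_order all_algebra.
From mathcomp Require Import mpoly.
Set Implicit Arguments. Unset Strict Implicit. Unset Printing Implicit Defensive.
Import GRing.Theory.
Local Open Scope ring_scope.

Definition is_comp (a : seq nat) : bool := all (fun k => 0 < k)%N a.

(* Variables x_1..x_n are 'X_i for i : 'I_n (i represents index i+1). *)

Definition Mmon (n : nat) (a : seq nat) : {mpoly rat[n]} :=
  \sum_(t : (size a).-tuple 'I_n | sorted (fun x y : 'I_n => (x < y)%N) t)
     \prod_(p <- zip (tval t) a) 'X_p.1 ^+ p.2.

Fixpoint rows_of (n k : nat) : seq (seq 'I_n) :=
  if k is k'.+1 then [seq x :: r | x <- ord_enum n, r <- rows_of n k']
  else [:: [::]].

(* All fillings of the diagram of shape a (row i has a_i cells) with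
   entries in 'I_n; a filling is the list of its rows, top to bottom. *)
Definition fillings (n : nat) (a : seq nat) : seq (seq (seq 'I_n)) :=
  foldr (fun k acc => [seq r :: T | r <- rows_of n k, T <- acc]) [:: [::]] a.

(* Entry in row i, column k (both 0-based) as a natural number;
   the entry value v : 'I_n stands for the integer v+1, which does not
   affect any comparison. *)
Definition ent (n : nat) (T : seq (seq 'I_n)) (i k : nat) : nat :=
  nth 0%N (map val (nth [::] T i)) k.

(* Composition tableau conditions (0-based indices: column k here is
   column k+1 of the paper). *)
Definition is_CT (n : nat) (a : seq nat) (T : seq (seq 'I_n)) : bool :=
  all (fun r => sorted (fun x y : 'I_n => (y <= x)%N) r) T &&
  all (fun i => all (fun j =>
     (i < j)%N ==> (ent T i 0 < ent T j 0)%N)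
     (iota 0 (size a))) (iota 0 (size a)) &&
  all (fun i => all (fun j => all (fun k =>
     [&& (i < j)%N, (k < nth 0%N a i)%N & (k < nth 0%N a j)%N] ==>
     (if (nth 0%N a j <= nth 0%N a i)%N then
        (0 < k)%N ==>
        ((ent T j k < ent T i k)%N || (ent T i k.-1 < ent T j k)%N)
      else
        ((ent T j k < ent T i k)%N || (ent T i k < ent T j k.+1)%N))
     ) (iota 0 (nth 0%N a i))) (iota 0 (size a))) (iota 0 (size a)).

Definition monoT (n : nat) (T : seq (seq 'I_n)) : {mpoly rat[n]} :=
  \prod_(r <- T) \prod_(x <- r) 'X_x.

Definition QS (n : nat) (a : seq nat) : {mpoly rat[n]} :=
  \sum_(T <- fillings n a | is_CT a T) monoT T.

Definition lam (a : seq nat) : seq nat := sort geq a.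

Definition lex_gt (l m : seq nat) : Prop :=
  exists i : nat, (nth 0 m i < nth 0 l i)%N /\
                  forall j, (j < i)%N -> nth 0 l j = nth 0 m j.

Definition revlex_gt (a g : seq nat) : Prop :=
  sumn a = sumn g /\
  (lex_gt (lam a) (lam g) \/ (lam a = lam g /\ lex_gt (rev a) (rev g))).

Definition QS_expansion (n : nat) (f : {mpoly rat[n]})
    (s : seq (seq nat)) (c : seq nat -> rat) : Prop :=
  [/\ uniq s,
      (forall g, g \in s -> is_comp g /\ (size g <= n)%N),
      (forall g, c g != 0 -> g \in s) &
      f = \sum_(g <- s) c g *: QS n g].

(* Main.v *)
Require Import Defs.
From mathcomp Require Import all_boot all_order all_algebra.
From mathcomp Require Import mpoly.
From mathcomp Require Import zify.
From Stdlib Require Import Classical.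
Set Implicit Arguments. Unset Strict Implicit. Unset Printing Implicit Defensive.
Import GRing.Theory.

Section LexA.
Local Open Scope nat_scope.

Lemma lex_gt_irr l : ~ lex_gt l l.
Proof. by case=> i [H _]; rewrite ltnn in H. Qed.

Lemma lex_gt_trans l m p : lex_gt l m -> lex_gt m p -> lex_gt l p.
Proof.
move=> [i [Hi Hpi]] [j [Hj Hpj]].
case: (ltngtP i j) => Hij.
- exists i; split; first by rewrite -(Hpj i Hij).
  by move=> k Hk; rewrite Hpi // Hpj // (ltn_trans Hk Hij).
- exists j; split; first by rewrite (Hpi j Hij).
  by move=> k Hk; rewrite Hpi ?(ltn_trans Hk Hij) // Hpj.
- subst j; exists i; split; first exact: ltn_trans Hj Hi.
  by move=> k Hk; rewrite Hpi // Hpj.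
Qed.

Lemma revlex_irr a : ~ revlex_gt a a.
Proof. by case=> _ [/lex_gt_irr|[_ /lex_gt_irr]]. Qed.

Lemma revlex_trans a b c : revlex_gt a b -> revlex_gt b c -> revlex_gt a c.
Proof.
move=> [s1 H1] [s2 H2]; split; first by rewrite s1.
case: H1 => [L1|[E1 R1]]; case: H2 => [L2|[E2 R2]].
- by left; apply: lex_gt_trans L1 L2.
- by left; rewrite -E2.
- by left; rewrite E1.
- by right; split; [rewrite E1|apply: lex_gt_trans R1 R2].
Qed.

Lemma max_elem (T : eqType) (R : T -> T -> Prop) (P : T -> Prop) (s : seq T) :
  (forall x, ~ R x x) -> (forall x y z, R x y -> R y z -> R x z) ->
  (exists x, x \in s /\ P x) ->
  exists x, [/\ x \in s, P x & forall y, y \in s -> P y -> ~ R y x].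
Proof.
move=> Hirr Htr; elim: s => [|y s IH] [x [Hx Px]] //.
case: (classic (exists x, x \in s /\ P x)) => [/IH [z [Hz Pz Hmax]]|Hno].
- case: (classic (P y /\ R y z)) => [[Py Ryz]|Hn].
  + exists y; split=> //; first by rewrite inE eqxx.
    move=> w; rewrite inE => /orP[/eqP ->|Hw] Pw; first exact: Hirr.
    by move=> Rwy; apply: (Hmax w Hw Pw); apply: Htr Rwy Ryz.
  + exists z; split=> //; first by rewrite inE Hz orbT.
    move=> w; rewrite inE => /orP[/eqP ->|Hw] Pw; last exact: Hmax.
    by move=> Rwz; apply: Hn.
- move: Hx; rewrite inE => /orP[/eqP Exy|Hx]; last by case: Hno; exists x.
  subst x; exists y; split=> //; first by rewrite inE eqxx.
  move=> w; rewrite inE => /orP[/eqP ->|Hw] Pw; first exact: Hirr.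
  by case: Hno; exists w.
Qed.

(* encoding for well-foundedness *)
Fixpoint enc (B L : nat) (l : seq nat) : nat :=
  if L is L'.+1 then nth 0 l 0 * B ^ L' + enc B L' (behead l) else 0.

Lemma enc_lt B L l : (forall r, nth 0 l r < B) -> enc B L l < B ^ L.
Proof.
elim: L l => [|L IH] l Hl /=; first by rewrite expn0.
have H1 : enc B L (behead l) < B ^ L.
  by apply: IH => r; rewrite nth_behead.
have H2 : nth 0 l 0 < B := Hl 0.
rewrite expnS.
have : nth 0 l 0 * B ^ L + B ^ L <= B * B ^ L.
  by rewrite -mulSnr leq_mul2r H2 orbT.
lia.
Qed.

Lemma enc_lex B L l m : (forall r, nth 0 l r < B) -> (forall r, nth 0 m r < B) ->
  (forall r, L <= r -> nth 0 l r = 0) -> lex_gt l m -> enc B L m < enc B L l.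
Proof.
elim: L l m => [|L IH] l m Hl Hm Hz [i [Hi Hp]] /=.
  by move: Hi; rewrite Hz.
case: i Hi Hp => [|i] Hi Hp.
  have : enc B L (behead m) < B ^ L.
    by apply: enc_lt => r; rewrite nth_behead.
  have : nth 0 m 0 * B ^ L + B ^ L <= nth 0 l 0 * B ^ L.
    by rewrite -mulSnr leq_mul2r Hi orbT.
  lia.
have E0 : nth 0 l 0 = nth 0 m 0 by apply: Hp.
rewrite E0 ltn_add2l; apply: IH.
- by move=> r; rewrite nth_behead.
- by move=> r; rewrite nth_behead.
- by move=> r Hr; rewrite nth_behead; apply: Hz.
- exists i; split; first by rewrite !nth_behead.
  by move=> j Hj; rewrite !nth_behead; apply: Hp.
Qed.

End LexA.

Section LexB.
Local Open Scope nat_scope.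

Lemma sumn_take_nth l i : sumn (take i l) = \sum_(0 <= r < i) nth 0 l r.
Proof.
elim: i l => [|i IH] l; first by rewrite take0 big_geq.
case: l => [|x l] /=.
  by rewrite big1 // => r _; rewrite nth_nil.
by rewrite big_nat_recl //= IH.
Qed.

Lemma nth_sorted_ge l i r : sorted geq l -> i <= r -> nth 0 l r <= nth 0 l i.
Proof.
move=> Hs Hir; case: (ltnP r (size l)) => Hr.
  have Hi : i < size l by apply: leq_ltn_trans Hr.
  apply: (sorted_leq_nth (leT := geq) _ _ 0 Hs) => //.
  - by move=> a b c Hba Hac; apply: leq_trans Hac Hba.
  - by move=> a; apply: leqnn.
by rewrite nth_default.
Qed.

Lemma sumn_filter_ge x s : x * size (filter (leq x) s) <= sumn (filter (leq x) s).
Proof.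
elim: s => [|v s IH] /=; first by rewrite muln0.
case: ifP => Hv //=.
by rewrite mulnS leq_add.
Qed.

Lemma eq_pos_nth l1 l2 : all (fun k => 0 < k) l1 -> all (fun k => 0 < k) l2 ->
  (forall r, nth 0 l1 r = nth 0 l2 r) -> l1 = l2.
Proof.
move=> H1 H2 E.
have Es : size l1 = size l2.
  case: (ltngtP (size l1) (size l2)) => [Hs|Hs|//].
  - by move/(all_nthP 0): H2 => /(_ _ Hs); rewrite -E nth_default.
  - by move/(all_nthP 0): H1 => /(_ _ Hs); rewrite E nth_default.
by apply: (eq_from_nth (x0 := 0)) => // r _.
Qed.

Lemma sum_ind_le N v : \sum_(0 <= c < N) (c < v) <= v.
Proof.
elim: N => [|N IH]; first by rewrite big_geq.
rewrite big_nat_recr //=; case: ltnP => H; last by rewrite addn0.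
have : \sum_(0 <= c < N) (c < v) <= N.
  rewrite -{2}(subn0 N) -[N - 0]muln1 -sum_nat_const_nat.
  by apply: leq_sum => c _; case: (c < v).
lia.
Qed.

Lemma minn_antitone (f : nat -> bool) j M :
  (forall r r', r' <= r -> f r -> f r') ->
  minn j (\sum_(0 <= r < M) f r) <= \sum_(0 <= r < j) f r.
Proof.
move=> Ha; case: (leqP M j) => HMj.
  rewrite geq_min; apply/orP; right.
  by rewrite (big_cat_nat (leq0n M) HMj) /= leq_addr.
rewrite (big_cat_nat (leq0n j) (ltnW HMj)) /=.
case Hj: (f j).
  have -> : \sum_(0 <= r < j) f r = j.
    rewrite -{2}(subn0 j) -[j - 0]muln1 -sum_nat_const_nat big_nat_cond [RHS]big_nat_cond.
    apply: eq_bigr => r /andP[/andP[_ Hr] _].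
    by rewrite (Ha j r (ltnW Hr) Hj).
  by rewrite geq_minl.
have -> : \sum_(j <= r < M) f r = 0.
  rewrite big_nat_cond big1 // => r /andP[/andP[Hr _] _].
  by case Hfr: (f r) => //; move: (Ha r j Hr Hfr); rewrite Hj.
by rewrite addn0 geq_minr.
Qed.

Lemma count_nth_sum (P : pred nat) l :
  count P l = \sum_(0 <= r < size l) P (nth 0 l r).
Proof.
elim: l => [|x l IH] /=; first by rewrite big_geq.
by rewrite big_nat_recl //= IH.
Qed.

Lemma lam_sorted b : sorted geq (lam b).
Proof. by apply: sort_sorted => x y; apply: leq_total. Qed.

Lemma lam_perm b : perm_eq (lam b) b.
Proof. by rewrite /lam perm_sort perm_refl. Qed.

Lemma lam_pos b : is_comp b -> all (fun k => 0 < k) (lam b).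
Proof. by move=> Hb; rewrite (perm_all _ (lam_perm b)). Qed.

Lemma lam_cmp b g N : is_comp b -> is_comp g ->
  (forall x, 0 < x -> sumn (filter (leq x) b) <=
     \sum_(0 <= c < N) minn (count (leq x) b) (count (fun v => c < v) g)) ->
  lam b = lam g \/ lex_gt (lam g) (lam b).
Proof.
move=> Hb Hg H.
set lb := lam b; set lg := lam g.
have sb : sorted geq lb := lam_sorted b.
have sg : sorted geq lg := lam_sorted g.
have pb : perm_eq lb b := lam_perm b.
have pg : perm_eq lg g := lam_perm g.
case: (eqVneq lb lg) => [E|Ne]; first by left.
right.
have Hex : exists r, nth 0 lb r != nth 0 lg r.
  apply: NNPP => Hn; apply: (negP Ne); apply/eqP.
  apply: eq_pos_nth; try exact: lam_pos.
  move=> r; apply/eqP/negP => Hr; apply: Hn; exists r; exact/negP.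
case: (ex_minnP Hex) => i Hi Hmin.
have Hpre : forall r, r < i -> nth 0 lb r = nth 0 lg r.
  move=> r Hr; apply/eqP/negP => Hn.
  by have := Hmin r (introN idP Hn); rewrite leqNgt Hr.
case: (ltngtP (nth 0 lb i) (nth 0 lg i)) => Hc.
- by exists i; split=> // r Hr; rewrite Hpre.
- exfalso.
  set x := nth 0 lb i in Hc; set y := nth 0 lg i in Hc.
  have Hisz : i < size lb.
    by case: ltnP => // Hs; move: Hc; rewrite /x nth_default.
  have Hx0 : 0 < x by apply: leq_ltn_trans Hc.
  move: (H x Hx0).
  have -> : sumn (filter (leq x) b) = sumn (filter (leq x) lb).
    by apply/esym/perm_sumn/perm_filter.
  have Hcnt : forall P, count P b = count P lb.
    by move=> P; apply/esym/permP.
  have Hcntg : forall P, count P g = count P lg.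
    by move=> P; apply/esym/permP.
  rewrite Hcnt.
  under eq_bigr do rewrite Hcntg.
  have Hall : all (leq x) (take i lb).
    apply/(all_nthP 0) => r; rewrite size_take Hisz => Hr.
    by rewrite nth_take // /x; apply: nth_sorted_ge => //; apply: ltnW.
  have Hsplit : lb = take i lb ++ drop i lb by rewrite cat_take_drop.
  set D := filter (leq x) (drop i lb).
  have Hsum : sumn (filter (leq x) lb) = \sum_(0 <= r < i) nth 0 lb r + sumn D.
    by rewrite {1}Hsplit filter_cat sumn_cat (all_filterP Hall) sumn_take_nth.
  have Hj : count (leq x) lb = i + size D.
    move: (Hall); rewrite all_count => /eqP Hc2.
    by rewrite {1}Hsplit count_cat Hc2 (size_takel (ltnW Hisz)) size_filter.
  have HD : 0 < size D.
    by rewrite /D (drop_nth 0 Hisz) /= leqnn.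
  have HDs := sumn_filter_ge x (drop i lb); rewrite -/D in HDs.
  rewrite Hsum Hj => Hle.
  set j := i + size D in Hle.
  have Hb1 : \sum_(0 <= c < N) minn j (count (fun v => c < v) lg)
             <= \sum_(0 <= r < j) nth 0 lg r.
    apply: leq_trans (_ : \sum_(0 <= c < N) \sum_(0 <= r < j) (c < nth 0 lg r) <= _).
      apply: leq_sum => c _; rewrite count_nth_sum.
      apply: minn_antitone => r r' Hrr' Hcr.
      by apply: leq_trans Hcr (nth_sorted_ge sg Hrr').
    rewrite exchange_big_nat /=; apply: leq_sum => r _; exact: sum_ind_le.
  have Hb2 : \sum_(0 <= r < j) nth 0 lg r <= \sum_(0 <= r < i) nth 0 lg r + size D * y.
    rewrite (big_cat_nat (leq0n i) (leq_addr _ _)) /= leq_add2l.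
    have -> : size D * y = \sum_(i <= r < j) y by rewrite sum_nat_const_nat /j addKn.
    rewrite big_nat_cond [X in _ <= X]big_nat_cond.
    apply: leq_sum => r /andP[/andP[Hr _] _]; exact: nth_sorted_ge.
  have Hpre' : \sum_(0 <= r < i) nth 0 lb r = \sum_(0 <= r < i) nth 0 lg r.
    rewrite big_nat_cond [RHS]big_nat_cond.
    by apply: eq_bigr => r /andP[/andP[_ Hr] _]; apply: Hpre.
  have Hxy : size D * y < size D * x by rewrite ltn_pmul2l.
  have Hxx : size D * x <= sumn D by rewrite mulnC.
  clear -Hle Hb1 Hb2 Hpre' Hxy Hxx.
  lia.
- by move: Hi; rewrite Hc eqxx.
Qed.

Lemma prefix_cmp B G : size B = size G ->
  (forall t, sumn (take t B) <= sumn (take t G)) -> B = G \/ lex_gt G B.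
Proof.
move=> Es H; case: (eqVneq B G) => [E|Ne]; first by left.
right.
have Hex : exists r, (r < size B) && (nth 0 B r != nth 0 G r).
  apply: NNPP => Hn; apply: (negP Ne); apply/eqP.
  apply: (eq_from_nth (x0 := 0)) => // r Hr; apply/eqP/negP => Hr'.
  by apply: Hn; exists r; rewrite Hr; apply/negP.
case: (ex_minnP Hex) => i /andP[Hi Hne] Hmin.
have Hpre : forall r, r < i -> nth 0 B r = nth 0 G r.
  move=> r Hr; apply/eqP/negP => Hn.
  have : (r < size B) && (nth 0 B r != nth 0 G r).
    by rewrite (ltn_trans Hr Hi); apply/negP.
  by move/Hmin; rewrite leqNgt Hr.
have Ht : take i B = take i G.
  apply: (eq_from_nth (x0 := 0)).
    by rewrite !size_takel // -?Es (ltnW Hi).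
  move=> r; rewrite size_takel ?(ltnW Hi) // => Hr.
  by rewrite !nth_take // Hpre.
have := H i.+1.
rewrite (take_nth 0 Hi) (take_nth 0 (_ : i < size G)) -?Es //.
rewrite -!cats1 !sumn_cat Ht /= !addn0 leq_add2l => Hle.
exists i; split; first by rewrite ltn_neqAle Hne Hle.
by move=> r Hr; rewrite Hpre.
Qed.

End LexB.

Section TabC.
Local Open Scope nat_scope.

Definition e (R : seq (seq nat)) i c := nth 0 (nth [::] R i) c.

Lemma sum_bool_count (T : Type) (P : pred T) (V : seq T) :
  \sum_(v <- V) (P v : nat) = count P V.
Proof. by elim: V => [|v V IH]; rewrite ?big_nil ?big_cons ?IH. Qed.

Lemma count_iota_sum (P : pred nat) k : count P (iota 0 k) = \sum_(0 <= i < k) P i.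
Proof.
elim: k => [|k IH]; first by rewrite big_geq.
by rewrite big_nat_recr // -IH -[k.+1]addn1 iotaD count_cat /= addn0.
Qed.

Lemma count_cells (P : pred nat) R g : map size R = g ->
  count P (flatten R) = \sum_(0 <= i < size g) \sum_(0 <= c < nth 0 g i) P (e R i c).
Proof.
move=> Hsh; rewrite count_flatten sumnE big_map (big_nth [::]) -Hsh size_map.
rewrite big_nat_cond [RHS]big_nat_cond; apply: eq_bigr => i /andP[/andP[_ Hi] _].
by rewrite count_nth_sum (nth_map [::]).
Qed.

Lemma sum_eqv x p k : x < k -> \sum_(p <= v < k) (x == v) = (p <= x).
Proof.
elim: k => [|k IH] // Hx.
case: (leqP p k) => Hpk.
  rewrite big_nat_recr //=.
  case: (eqVneq x k) => [->|Hne].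
    rewrite big_nat_cond big1 ?Hpk // => v /andP[/andP[_ Hv] _].
    by case: eqP => // E; move: Hv; rewrite E ltnn.
  rewrite addn0 IH //; by rewrite ltn_neqAle Hne -ltnS.
by rewrite big_geq // leqNgt (leq_ltn_trans (Hx : x <= k) Hpk).
Qed.

Lemma count_range (s : seq nat) p k : all (fun x => x < k) s ->
  count (leq p) s = \sum_(p <= v < k) count_mem v s.
Proof.
elim: s => [|x s IH] /=.
  by move=> _; rewrite big1.
move=> /andP[Hx Hs]; rewrite big_split /= IH // sum_eqv //.
Qed.

Lemma sum_count_mem (V s : seq nat) : uniq V ->
  \sum_(v <- V) count_mem v s = count (mem V) s.
Proof.
move=> HV; elim: s => [|x s IH] /=.
  by rewrite big1.
rewrite big_split /= IH; congr (_ + _).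
rewrite (sum_bool_count (fun v => x == v)) -count_uniq_mem //.
by apply: eq_count => v; rewrite eq_sym.
Qed.

Lemma nth_le_sumn l i : nth 0 l i <= sumn l.
Proof.
elim: l i => [|x l IH] [|i] //=; first exact: leq_addr.
exact: leq_trans (IH i) (leq_addl _ _).
Qed.

Lemma sumn_drop_nth s p : sumn (drop p s) = \sum_(p <= v < size s) nth 0 s v.
Proof.
case: (leqP p (size s)) => Hp.
  have := sumn_take_nth s (size s); rewrite take_size => Hs.
  have := cat_take_drop p s => /(congr1 sumn); rewrite sumn_cat sumn_take_nth Hs.
  rewrite (big_cat_nat (leq0n p) Hp) /=. lia.
by rewrite drop_oversize ?(ltnW Hp) // big_geq // ltnW.
Qed.

Lemma sum_eq_le (f h : nat -> nat) p q r0 : p <= r0 < q ->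
  (forall r, p <= r < q -> f r <= h r) ->
  \sum_(p <= r < q) f r = \sum_(p <= r < q) h r -> f r0 = h r0.
Proof.
move=> /andP[H1 H2] Hle Heq.
move: Heq; rewrite (big_cat_nat H1 (ltnW H2)) (big_cat_nat H1 (ltnW H2)) /=.
rewrite (big_ltn H2) (big_ltn H2).
have A : \sum_(p <= r < r0) f r <= \sum_(p <= r < r0) h r.
  rewrite big_nat_cond [X in _ <= X]big_nat_cond.
  apply: leq_sum => r /andP[/andP[Hr1 Hr2] _]; apply: Hle; rewrite Hr1 /=.
  exact: ltn_trans Hr2 H2.
have B : \sum_(r0.+1 <= r < q) f r <= \sum_(r0.+1 <= r < q) h r.
  rewrite big_nat_cond [X in _ <= X]big_nat_cond.
  apply: leq_sum => r /andP[/andP[Hr1 Hr2] _]; apply: Hle; rewrite Hr2 andbT.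
  by apply: leq_trans H1 (ltnW Hr1).
have C : f r0 <= h r0 by apply: Hle; rewrite H1 H2.
lia.
Qed.

Lemma sum_bool_all (P : pred nat) m : \sum_(0 <= c < m) P c = m -> forall c, c < m -> P c.
Proof.
move=> H c Hc; apply: NNPP => Hn.
have : \sum_(0 <= c < m) P c < m.
  rewrite (big_cat_nat (leq0n c) (ltnW Hc)) /= (big_ltn Hc).
  have : P c = false by apply/negbTE/negP.
  move=> ->.
  have A : \sum_(0 <= i < c) P i <= c.
    rewrite -{2}(subn0 c) -[c - 0]muln1 -sum_nat_const_nat.
    by apply: leq_sum => i _; case: (P i).
  have B : \sum_(c.+1 <= i < m) P i <= m - c.+1.
    rewrite -[m - c.+1]muln1 -sum_nat_const_nat.
    by apply: leq_sum => i _; case: (P i).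
  lia.
by rewrite H ltnn.
Qed.

Definition tabP R g b :=
  [/\ map size R = g,
      (forall i c c', i < size g -> c <= c' -> c' < nth 0 g i -> e R i c' <= e R i c),
      (forall i j, i < j -> j < size g -> e R i 0 < e R j 0),
      (forall i j c, i < j -> j < size g -> c < nth 0 g i -> c < nth 0 g j ->
         e R i c != e R j c) &
      (forall v, count_mem v (flatten R) = nth 0 b v)].

Section Tab.
Variables (R : seq (seq nat)) (g b : seq nat).
Hypothesis Hg : is_comp g.
Hypothesis Hb : is_comp b.
Hypothesis HT : tabP R g b.

Let Hsh : map size R = g. Proof. by case: HT. Qed.
Let Hrow : forall i c c', i < size g -> c <= c' -> c' < nth 0 g i -> e R i c' <= e R i c.
Proof. by case: HT. Qed.
Let Hcol0 : forall i j, i < j -> j < size g -> e R i 0 < e R j 0.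
Proof. by case: HT. Qed.
Let Hcol : forall i j c, i < j -> j < size g -> c < nth 0 g i -> c < nth 0 g j ->
         e R i c != e R j c.
Proof. by case: HT. Qed.
Let Hcont : forall v, count_mem v (flatten R) = nth 0 b v.
Proof. by case: HT. Qed.

Let HszR : size R = size g. Proof. by rewrite -Hsh size_map. Qed.

Lemma vals_lt : all (fun x => x < size b) (flatten R).
Proof.
apply/allP => x Hx; case: ltnP => // Hs.
have : 0 < count_mem x (flatten R) by rewrite -has_count has_pred1.
by rewrite Hcont nth_default.
Qed.

Lemma cell_mem i c : i < size g -> c < nth 0 g i -> e R i c \in flatten R.
Proof.
move=> Hi Hc; apply/flattenP; exists (nth [::] R i).
  by apply: mem_nth; rewrite HszR.
apply: mem_nth; by rewrite -(nth_map _ 0) ?HszR // Hsh.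
Qed.

Lemma cell_lt i c : i < size g -> c < nth 0 g i -> e R i c < size b.
Proof. by move=> Hi Hc; apply: (allP vals_lt); apply: cell_mem. Qed.

Lemma sumn_eq : sumn b = sumn g.
Proof.
have := sumn_take_nth b (size b); rewrite take_size => ->.
under eq_bigr do rewrite -Hcont.
rewrite -count_range ?vals_lt //.
rewrite (eq_count (a2 := predT)) // count_predT size_flatten /shape Hsh //.
Qed.

Lemma g_pos i : i < size g -> 0 < nth 0 g i.
Proof. by move=> Hi; apply: (all_nthP 0 Hg). Qed.

Lemma lam_part : lam b = lam g \/ lex_gt (lam g) (lam b).
Proof.
apply: (@lam_cmp b g (sumn g)) => // x Hx.
set V := [seq v <- iota 0 (size b) | x <= nth 0 b v].
have HVu : uniq V by rewrite filter_uniq // iota_uniq.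
have Hbm : b = map (nth 0 b) (iota 0 (size b)) by rewrite map_nth_iota0 // take_size.
have HszV : size V = count (leq x) b.
  by rewrite {1}Hbm count_map size_filter.
have -> : sumn (filter (leq x) b) = count (mem V) (flatten R).
  rewrite {1}Hbm filter_map sumnE big_map -sum_count_mem //.
  by apply: eq_bigr => v _; rewrite Hcont.
rewrite -HszV (count_cells _ Hsh).
have -> : \sum_(0 <= i < size g) \sum_(0 <= c < nth 0 g i) (e R i c \in V)
   = \sum_(0 <= i < size g) \sum_(0 <= c < sumn g) ((c < nth 0 g i) && (e R i c \in V)).
  apply: eq_bigr => i _.
  rewrite (big_cat_nat (leq0n _) (nth_le_sumn g i)) /=.
  have -> : \sum_(nth 0 g i <= c < sumn g) ((c < nth 0 g i) && (e R i c \in V)) = 0.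
    by rewrite big_nat_cond big1 // => c /andP[/andP[Hc _] _]; rewrite ltnNge Hc.
  rewrite addn0 big_nat_cond [RHS]big_nat_cond; apply: eq_bigr => c /andP[/andP[_ Hc] _].
  by rewrite Hc.
rewrite exchange_big_nat /=; apply: leq_sum => c _.
rewrite leq_min; apply/andP; split.
- set L := [seq e R i c | i <- iota 0 (size g) & (c < nth 0 g i) && (e R i c \in V)].
  have -> : \sum_(0 <= i < size g) ((c < nth 0 g i) && (e R i c \in V)) = size L.
    by rewrite size_map size_filter count_iota_sum.
  apply: uniq_leq_size.
    rewrite map_inj_in_uniq ?filter_uniq ?iota_uniq //.
    move=> i j; rewrite !mem_filter !mem_iota /= => /andP[/andP[Hci _] Hi] /andP[/andP[Hcj _] Hj] E.
    case: (ltngtP i j) => // Hij.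
    + by move: (Hcol Hij Hj Hci Hcj); rewrite E eqxx.
    + by move: (Hcol Hij Hi Hcj Hci); rewrite E eqxx.
  move=> v /mapP[i]; rewrite mem_filter => /andP[/andP[_ HV] _] ->; exact: HV.
- rewrite count_nth_sum; apply: leq_sum => i _; by case: (c < nth 0 g i); rewrite ?leq_b1.
Qed.

Section SameSize.
Hypothesis Hsz : size b = size g.

Lemma first_col d i : i + d < size g -> e R i 0 + d < size g.
Proof.
elim: d i => [|d IH] i Hid.
  have Hi : i < size g by rewrite -(addn0 i).
  by rewrite addn0 -Hsz; apply: cell_lt => //; apply: g_pos.
have H1 : e R i 0 < e R i.+1 0.
  by apply: Hcol0 => //; apply: leq_ltn_trans Hid; rewrite addnS ltnS leq_addr.
have H2 : e R i.+1 0 + d < size g by apply: IH; rewrite addSnnS.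
lia.
Qed.

Lemma ent_le i c : i < size g -> c < nth 0 g i -> e R i c <= i.
Proof.
move=> Hi Hc; apply: leq_trans (Hrow Hi (leq0n c) Hc) _.
have H := @first_col (size g - i.+1) i.
have Hd : i + (size g - i.+1) < size g by lia.
have := H Hd. lia.
Qed.

Definition Fp p i := \sum_(0 <= c < nth 0 g i) (p <= e R i c).

Lemma Fp_le p i : Fp p i <= nth 0 g i.
Proof.
rewrite /Fp -{2}(subn0 (nth 0 g i)) -[_ - 0]muln1 -sum_nat_const_nat.
by apply: leq_sum => c _; case: (p <= _).
Qed.

Lemma suffix_core p : p <= size g ->
  sumn (drop p b) = \sum_(p <= i < size g) Fp p i.
Proof.
move=> Hp.
rewrite sumn_drop_nth Hsz.
under eq_bigr do rewrite -Hcont.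
rewrite -(@count_range _ p (size g)); last by rewrite -Hsz vals_lt.
rewrite (count_cells _ Hsh).
rewrite (big_cat_nat (leq0n p) Hp) /= [X in X + _]big_nat_cond big1 //.
move=> i /andP[/andP[_ Hi] _]; rewrite big_nat_cond big1 // => c /andP[/andP[_ Hc] _].
have Hig : i < size g by apply: leq_trans Hi Hp.
have : e R i c < p by apply: leq_ltn_trans (ent_le Hig Hc) Hi.
by rewrite ltnNge => /negbTE ->.
Qed.

Lemma suffix_le p : sumn (drop p b) <= sumn (drop p g).
Proof.
case: (leqP p (size g)) => Hp.
  rewrite suffix_core // sumn_drop_nth.
  rewrite big_nat_cond [X in _ <= X]big_nat_cond; apply: leq_sum => i _; exact: Fp_le.
by rewrite drop_oversize // Hsz ltnW.
Qed.

Lemma rev_part : b = g \/ lex_gt (rev g) (rev b).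
Proof.
case: (@prefix_cmp (rev b) (rev g)).
- by rewrite !size_rev.
- by move=> t; rewrite !take_rev !sumn_rev Hsz; exact: suffix_le.
- by move=> E; left; rewrite -(revK b) E revK.
- by right.
Qed.

Lemma uniq_part : b = g -> forall i c, i < size g -> c < nth 0 g i -> e R i c = i.
Proof.
move=> Ebg i c Hi Hc; apply/eqP; rewrite eqn_leq ent_le //=.
have Hall : Fp i i = nth 0 g i.
  apply: (@sum_eq_le (Fp i) (nth 0 g) i (size g)); first by rewrite leqnn Hi.
    by move=> r _; apply: Fp_le.
  by rewrite -suffix_core ?(ltnW Hi) // -sumn_drop_nth Ebg.
exact: (sum_bool_all Hall).
Qed.

End SameSize.

Lemma tab_main : b = g \/ revlex_gt g b.
Proof.
case: lam_part => [E|L]; last by right; split=> //; [rewrite sumn_eq|left].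
have Hsz : size b = size g.
  by rewrite -(perm_size (lam_perm b)) -(perm_size (lam_perm g)) E.
case: (rev_part Hsz) => [->|L]; first by left.
by right; split; [rewrite sumn_eq|right].
Qed.

End Tab.
End TabC.

Section Fill.
Local Open Scope nat_scope.
Variable n : nat.

Lemma rows_ofS k : rows_of n k.+1 = [seq x :: r | x <- ord_enum n, r <- rows_of n k].
Proof. by []. Qed.

Lemma fillingsS k a : fillings n (k :: a) = [seq r :: T | r <- rows_of n k, T <- fillings n a].
Proof. by []. Qed.

Lemma mem_rows_of k (r : seq 'I_n) : (r \in rows_of n k) = (size r == k).
Proof.
elim: k r => [|k IH] r; first by case: r.
rewrite rows_ofS; case: r => [|x r].
  by apply/allpairsP => [[p [_ _]]].
apply/allpairsP/idP => [[[y r'] [_ Hr' /= [_ ->]]]|Hr].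
  by rewrite /= eqSS -IH.
by exists (x, r); rewrite mem_ord_enum IH.
Qed.

Lemma uniq_rows_of k : uniq (rows_of n k).
Proof.
elim: k => [|k IH] //; rewrite rows_ofS.
apply: allpairs_uniq => //; first exact: ord_enum_uniq.
by move=> [x r] [y r'] _ _ /= [-> ->].
Qed.

Lemma mem_fillings a (T : seq (seq 'I_n)) : (T \in fillings n a) = (map size T == a).
Proof.
elim: a T => [|k a IH] T; first by case: T.
rewrite fillingsS; case: T => [|r T].
  by apply/allpairsP => [[p [_ _]]].
apply/allpairsP/idP => [[[r' T'] [Hr HT /= [-> ->]]]|H].
  by move: Hr HT; rewrite mem_rows_of IH /= => /eqP -> /eqP ->.
case/eqP: H => Hr HT; exists (r, T); rewrite mem_rows_of IH Hr HT; split=> //.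
Qed.

Lemma uniq_fillings a : uniq (fillings n a).
Proof.
elim: a => [|k a IH] //; rewrite fillingsS.
apply: allpairs_uniq => //; first exact: uniq_rows_of.
by move=> [x r] [y r'] _ _ /= [-> ->].
Qed.

Definition vals (T : seq (seq 'I_n)) : seq nat := flatten (map (map val) T).

Definition cntm (T : seq (seq 'I_n)) : 'X_{1..n} :=
  [multinom count_mem (val i) (vals T) | i < n].

Lemma vals_map T : vals T = map val (flatten T).
Proof. by rewrite /vals map_flatten. Qed.

Lemma count_vals (T : seq (seq 'I_n)) (i : 'I_n) : count_mem (val i) (vals T) = count_mem i (flatten T).
Proof. by rewrite vals_map count_map; apply: eq_count => x /=; rewrite val_eqE. Qed.

Lemma monoT_eq T : monoT T = 'X_[cntm T].
Proof.
rewrite /monoT.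
under eq_bigr do rewrite mprodXE.
rewrite mprodXE; congr ('X_[_]); apply/mnmP => i.
rewrite mnm_sumE mnmE count_vals.
elim: T => [|r T IH]; first by rewrite big_nil.
rewrite big_cons /= count_cat -IH; congr (_ + _).
rewrite mnm_sumE; elim: r => [|x r IHr]; first by rewrite big_nil.
by rewrite big_cons /= IHr mnm1E.
Qed.

Definition cellb (a : seq nat) i k := (i < size a) && (k < nth 0 a i).

Lemma nth_map_nil (A B : Type) (f : seq A -> seq B) (s : seq (seq A)) i :
  f [::] = [::] -> nth [::] (map f s) i = f (nth [::] s i).
Proof.
move=> Hf; case: (ltnP i (size s)) => Hi; first by rewrite (nth_map [::]).
by rewrite !nth_default ?size_map.
Qed.

Lemma ent_e (T : seq (seq 'I_n)) i k : ent T i k = e (map (map val) T) i k.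
Proof. by rewrite /ent /e nth_map_nil. Qed.

Lemma ent_cell (T : seq (seq 'I_n)) a i k x0 : map size T = a -> cellb a i k ->
  ent T i k = val (nth x0 (nth [::] T i) k).
Proof.
move=> <- /andP[Hi Hk]; rewrite size_map in Hi; rewrite (nth_map [::]) // in Hk.
by rewrite /ent (nth_map x0).
Qed.

Lemma cell_in_flatten (T : seq (seq 'I_n)) a i k x0 : map size T = a -> cellb a i k ->
  nth x0 (nth [::] T i) k \in flatten T.
Proof.
move=> <- /andP[Hi Hk]; rewrite size_map in Hi; rewrite (nth_map [::]) // in Hk.
apply/flattenP; exists (nth [::] T i); first exact: mem_nth.
exact: mem_nth.
Qed.

Section CTfacts.
Variables (a : seq nat) (T : seq (seq 'I_n)).
Hypothesis Ha : is_comp a.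
Hypothesis Hsh : map size T = a.
Hypothesis HCT : is_CT a T.

Lemma CT1 : all (fun r => sorted (fun x y : 'I_n => (y <= x)%N) r) T.
Proof. by move/andP: HCT => [/andP[H1 _] _]. Qed.

Lemma CT2 i j : i < j -> j < size a -> ent T i 0 < ent T j 0.
Proof.
move=> Hij Hj; move/andP: HCT => [/andP[_ H2] _].
have Hi : i < size a := ltn_trans Hij Hj.
move/allP: H2 => /(_ i); rewrite mem_iota Hi => /(_ isT) /allP /(_ j).
by rewrite mem_iota Hj Hij => /(_ isT).
Qed.

Lemma CT3 i j k : i < j -> j < size a -> k < nth 0 a i -> k < nth 0 a j ->
  if nth 0 a j <= nth 0 a i then
    (0 < k) ==> ((ent T j k < ent T i k) || (ent T i k.-1 < ent T j k))
  else ((ent T j k < ent T i k) || (ent T i k < ent T j k.+1)).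
Proof.
move=> Hij Hj Hki Hkj; move/andP: HCT => [_ H3].
have Hi : i < size a := ltn_trans Hij Hj.
move/allP: H3 => /(_ i); rewrite mem_iota Hi => /(_ isT) /allP /(_ j).
rewrite mem_iota Hj => /(_ isT) /allP /(_ k); rewrite mem_iota Hki => /(_ isT).
by rewrite Hij Hkj.
Qed.

Lemma row_dec i c c' : i < size a -> c <= c' -> c' < nth 0 a i -> ent T i c' <= ent T i c.
Proof.
move=> Hi Hcc Hc'.
have HT : nth [::] T i \in T by apply: mem_nth; rewrite -Hsh size_map in Hi.
have Hs : sorted geq (map val (nth [::] T i)) by rewrite sorted_map; apply: (allP CT1).
by rewrite /ent; apply: nth_sorted_ge.
Qed.

Lemma col_distinct i j c : i < j -> j < size a -> c < nth 0 a i -> c < nth 0 a j ->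
  ent T i c != ent T j c.
Proof.
move=> Hij Hj Hci Hcj; apply/eqP => E.
have Hi : i < size a := ltn_trans Hij Hj.
case: c Hci Hcj E => [|c] Hci Hcj E.
  by move: (CT2 Hij Hj); rewrite E ltnn.
have := CT3 Hij Hj Hci Hcj; case: ifP => Hle /=.
  rewrite E ltnn /= => H.
  have := row_dec Hi (leqnSn c) Hci; rewrite E.
  by rewrite leqNgt H.
rewrite E ltnn /= => H.
have Hc2 : c.+2 < nth 0 a j.
  by move/negbT: Hle; rewrite -ltnNge => Hl; apply: leq_ltn_trans Hci Hl.
have := row_dec Hj (leqnSn c.+1) Hc2.
by rewrite leqNgt H.
Qed.

Lemma tabP_of b : (forall v, count_mem v (vals T) = nth 0 b v) ->
  tabP (map (map val) T) a b.
Proof.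
move=> Hc; split.
- by rewrite -map_comp -Hsh; apply: eq_map => r; rewrite /= size_map.
- by move=> i c c' Hi Hcc Hc'; rewrite -!ent_e; apply: row_dec.
- by move=> i j Hij Hj; rewrite -!ent_e; apply: CT2.
- by move=> i j c Hij Hj Hci Hcj; rewrite -!ent_e; apply: col_distinct.
- exact: Hc.
Qed.

End CTfacts.

End Fill.

Section Coefs.
Variable n : nat.

Definition mb (b : seq nat) : 'X_{1..n} := [multinom nth 0 b i | i < n].

Definition Kc (g b : seq nat) : nat :=
  count (fun T => is_CT g T && (cntm T == mb b)) (fillings n g).

Local Open Scope ring_scope.

Lemma QS_coef a m :
  (QS n a)@_m = (count (fun T => is_CT a T && (cntm T == m)) (fillings n a))%:R.
Proof.
rewrite /QS raddf_sum /=.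
under eq_bigr do rewrite monoT_eq mcoeffX.
rewrite -natr_sum -big_filter; congr (_ %:R).
rewrite (sum_bool_count (fun T => cntm T == m)) count_filter.
by apply: eq_count => T /=; rewrite andbC.
Qed.

Lemma QS_coef_mb g b : (QS n g)@_(mb b) = (Kc g b)%:R.
Proof. exact: QS_coef. Qed.

Local Close Scope ring_scope.
Local Open Scope nat_scope.

Lemma vals_lt_n (T : seq (seq 'I_n)) : all (fun x => x < n) (vals T).
Proof. by rewrite vals_map all_map; apply/allP => x _ /=. Qed.

Lemma vals_cnt (T : seq (seq 'I_n)) b : size b <= n -> cntm T = mb b ->
  forall v, count_mem v (vals T) = nth 0 b v.
Proof.
move=> Hb E v; case: (ltnP v n) => Hv.
  have := congr1 (fun m : 'X_{1..n} => m (Ordinal Hv)) E.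
  by rewrite /= !mnmE.
rewrite nth_default ?(leq_trans Hb Hv) //.
apply/eqP; rewrite -leqn0 leqNgt -has_count has_pred1; apply/negP => Hin.
by have := allP (vals_lt_n T) v Hin; rewrite ltnNge Hv.
Qed.

Lemma K_tri g b : is_comp g -> is_comp b -> size b <= n ->
  Kc g b != 0 -> b = g \/ revlex_gt g b.
Proof.
move=> Hg Hb Hbn; rewrite -lt0n -has_count => /hasP[T].
rewrite mem_fillings => /eqP Hsh /andP[HCT /eqP Hc].
apply: (tab_main Hg Hb (tabP_of Hsh HCT _)).
exact: vals_cnt.
Qed.

Lemma sum_eq_ind (F : nat -> nat) N v :
  \sum_(0 <= i < N) (i == v) * F i = if v < N then F v else 0.
Proof.
elim: N => [|N IH]; first by rewrite big_geq.
rewrite big_nat_recr //= IH.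
case: (ltngtP v N) => H.
- by rewrite (ltn_trans H (ltnSn N)) mul0n addn0.
- by rewrite ltnNge H mul0n.
- by rewrite H ltnSn mul1n.
Qed.

Lemma sorted_nseq_refl (T : Type) (r : rel T) k (x : T) : r x x -> sorted r (nseq k x).
Proof. by move=> Hr; elim: k => [|[|k] IH] //=; rewrite Hr. Qed.

Section Diag.
Variables (g : seq nat) (x0 : 'I_n).
Hypothesis Hg : is_comp g.
Hypothesis Hgn : size g <= n.

Definition T0 : seq (seq 'I_n) :=
  map (fun i => nseq (nth 0 g i) (insubd x0 i)) (iota 0 (size g)).

Lemma T0_shape : map size T0 = g.
Proof.
rewrite /T0 -map_comp.
rewrite (eq_map (g := nth 0 g)); first by rewrite map_nth_iota0 // take_size.
by move=> i /=; rewrite size_nseq.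
Qed.

Lemma T0_row i : i < size g -> nth [::] T0 i = nseq (nth 0 g i) (insubd x0 i).
Proof. by move=> Hi; rewrite /T0 (nth_map 0) ?size_iota // nth_iota. Qed.

Lemma T0_ent i c : cellb g i c -> ent T0 i c = i.
Proof.
move=> Hc; rewrite (ent_cell x0 T0_shape Hc); move/andP: Hc => [Hi Hc].
rewrite T0_row // nth_nseq Hc val_insubd.
by rewrite (leq_trans Hi Hgn).
Qed.

Lemma g_pos' i : i < size g -> 0 < nth 0 g i.
Proof. by move=> Hi; apply: (all_nthP 0 Hg). Qed.

Lemma T0_CT : is_CT g T0.
Proof.
apply/andP; split; first (apply/andP; split).
- apply/allP => r /mapP[i _ ->]; exact: sorted_nseq_refl.
- apply/allP => i; rewrite mem_iota add0n => /andP[_ Hi].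
  apply/allP => j; rewrite mem_iota add0n => /andP[_ Hj]; apply/implyP => Hij.
  by rewrite !T0_ent // /cellb ?Hi ?Hj g_pos'.
- apply/allP => i; rewrite mem_iota add0n => /andP[_ Hi].
  apply/allP => j; rewrite mem_iota add0n => /andP[_ Hj].
  apply/allP => k; rewrite mem_iota add0n => /andP[_ Hk].
  apply/implyP => /and3P[Hij Hki Hkj].
  have Ci : cellb g i k by rewrite /cellb Hi.
  have Cj : cellb g j k by rewrite /cellb Hj.
  rewrite (T0_ent Ci) (T0_ent Cj).
  case: ifP => Hle.
    apply/implyP => Hk0; rewrite (T0_ent (c := k.-1)); first by rewrite Hij orbT.
    by rewrite /cellb Hi /=; apply: leq_ltn_trans (leq_pred k) Hki.
  rewrite (T0_ent (i := j) (c := k.+1)); first by rewrite Hij orbT.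
  rewrite /cellb Hj /=; move/negbT: Hle; rewrite -ltnNge => Hl.
  exact: leq_ltn_trans Hki Hl.
Qed.

Lemma T0_cnt : cntm T0 = mb g.
Proof.
apply/mnmP => i; rewrite !mnmE.
rewrite /vals (count_cells _ (R := map (map val) T0) (g := g)); last first.
  by rewrite -map_comp -T0_shape; apply: eq_map => r /=; rewrite size_map.
have -> : \sum_(0 <= i0 < size g) \sum_(0 <= c < nth 0 g i0)
            (e [seq [seq val i1 | i1 <- i2] | i2 <- T0] i0 c == val i)
        = \sum_(0 <= i0 < size g) (i0 == val i) * nth 0 g i0.
  rewrite big_nat_cond [RHS]big_nat_cond; apply: eq_bigr => j /andP[/andP[_ Hj] _].
  rewrite big_nat_cond (eq_bigr (fun _ => (j == val i) : nat)); last first.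
    by move=> c /andP[/andP[_ Hc] _]; rewrite -ent_e T0_ent // /cellb Hj.
  by rewrite -big_nat_cond sum_nat_const_nat subn0 mulnC.
rewrite sum_eq_ind; case: ltnP => // H; by rewrite nth_default.
Qed.

Lemma T0_unique T : T \in fillings n g -> is_CT g T -> cntm T = mb g -> T = T0.
Proof.
rewrite mem_fillings => /eqP Hsh HCT Hc.
have HT := tabP_of Hsh HCT (vals_cnt Hgn Hc).
have Hu := uniq_part Hg Hg HT erefl erefl.
have HszT : size T = size g by rewrite -Hsh size_map.
apply: (eq_from_nth (x0 := [::])); first by rewrite HszT -T0_shape size_map.
move=> i Hi; rewrite HszT in Hi.
have Hs1 : size (nth [::] T i) = nth 0 g i by rewrite -Hsh (nth_map [::]) // HszT.
apply: (eq_from_nth (x0 := x0)); first by rewrite Hs1 T0_row // size_nseq.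
move=> c Hcc; rewrite Hs1 in Hcc.
have Ce : cellb g i c by rewrite /cellb Hi.
apply: val_inj.
rewrite -(ent_cell x0 Hsh Ce) -(ent_cell x0 T0_shape Ce).
by rewrite T0_ent // ent_e Hu.
Qed.

Lemma K_diag : Kc g g = 1.
Proof.
rewrite /Kc (eq_in_count (a2 := pred1 T0)).
  by rewrite count_uniq_mem ?uniq_fillings // mem_fillings T0_shape eqxx.
move=> T HT /=; apply/andP/eqP => [[H1 /eqP H2]|->]; first exact: T0_unique.
by rewrite T0_CT T0_cnt.
Qed.

End Diag.
End Coefs.

Section MmonCoef.
Variable n : nat.
Local Open Scope nat_scope.

Definition ltO : rel 'I_n := fun x y => (x < y)%N.
Definition supp (m : 'X_{1..n}) : seq 'I_n := [seq i <- enum 'I_n | m i != 0].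
Definition flat (m : 'X_{1..n}) : seq nat := map (fun i => m i) (supp m).
Definition mt (t : seq 'I_n) (a : seq nat) : 'X_{1..n} :=
  (\sum_(p <- zip t a) U_(p.1) *+ p.2)%MM.

Lemma ltO_trans : transitive ltO.
Proof. by move=> y x z; apply: ltn_trans. Qed.

Lemma ltO_irr : irreflexive ltO.
Proof. by move=> x; apply: ltnn. Qed.

Lemma sorted_ltO_uniq (t : seq 'I_n) : sorted ltO t -> uniq t.
Proof. exact: (sorted_uniq ltO_trans ltO_irr). Qed.

Lemma sorted_enum : sorted ltO (enum 'I_n).
Proof. by have := iota_ltn_sorted 0 n; rewrite -val_enum_ord sorted_map. Qed.

Lemma supp_sorted m : sorted ltO (supp m).
Proof. apply: sorted_filter; [exact: ltO_trans|exact: sorted_enum]. Qed.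

Lemma supp_uniq m : uniq (supp m).
Proof. exact/sorted_ltO_uniq/supp_sorted. Qed.

Lemma mem_supp m i : (i \in supp m) = (m i != 0).
Proof. by rewrite mem_filter mem_enum andbT. Qed.

Lemma size_supp m : size (supp m) <= n.
Proof. by rewrite size_filter; apply: leq_trans (count_size _ _) _; rewrite size_enum_ord. Qed.

Lemma size_flat m : size (flat m) = size (supp m).
Proof. by rewrite size_map. Qed.

Lemma flat_comp m : is_comp (flat m).
Proof. by rewrite /is_comp all_map; apply/allP => i; rewrite mem_supp /= lt0n. Qed.

Lemma mt_cons x t k a : mt (x :: t) (k :: a) = (U_(x) *+ k + mt t a)%MM.
Proof. by rewrite /mt /= big_cons. Qed.

Lemma mt_at t a i : uniq t -> size t = size a ->
  mt t a i = if i \in t then nth 0 a (index i t) else 0.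
Proof.
elim: t a => [|x t IH] [|k a] //=.
  by move=> _ _; rewrite /mt big_nil mnm0E.
move=> /andP[Hx Hu] [Hs]; rewrite mt_cons mnmDE mulmnE mnm1E IH // in_cons.
case: (eqVneq i x) => [->|Hne] /=; first by rewrite (negbTE Hx) mul1n addn0.
by rewrite mul0n add0n.
Qed.

Lemma supp_mt t a : sorted ltO t -> size t = size a -> is_comp a -> supp (mt t a) = t.
Proof.
move=> Hs Hsz Ha; have Hu := sorted_ltO_uniq Hs.
apply: (irr_sorted_eq_in (leT := ltO)).
- by move=> x y z _ _ _; apply: ltO_trans.
- by move=> x _; apply: ltO_irr.
- exact: supp_sorted.
- exact: Hs.
move=> i; rewrite mem_supp mt_at //; case: ifP => Hi //=.
  rewrite -lt0n; apply: (all_nthP 0 Ha); rewrite -Hsz index_mem //.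
Qed.

Lemma map_index_nth (t : seq 'I_n) a : uniq t -> size t = size a ->
  map (fun i => nth 0 a (index i t)) t = a.
Proof.
elim: t a => [|x t IH] [|k a] //= /andP[Hx Hu] [Hs].
rewrite eqxx; congr (_ :: _).
transitivity (map (fun i => nth 0 a (index i t)) t); last exact: IH.
apply/eq_in_map => y Hy /=.
by case: eqP => // E; move: Hx; rewrite E Hy.

Qed.

Lemma flat_mt t a : sorted ltO t -> size t = size a -> is_comp a -> flat (mt t a) = a.
Proof.
move=> Hs Hsz Ha; have Hu := sorted_ltO_uniq Hs.
rewrite /flat supp_mt // -{2}(map_index_nth Hu Hsz).
by apply/eq_in_map => i Hi; rewrite mt_at // Hi.
Qed.

Lemma mt_supp m : mt (supp m) (flat m) = m.
Proof.
apply/mnmP => i; rewrite mt_at ?supp_uniq ?size_flat //.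
case: ifP => Hi; last by move: Hi; rewrite mem_supp => /negbT; rewrite negbK => /eqP.
by rewrite /flat (nth_map i) ?index_mem // nth_index.
Qed.

Local Open Scope ring_scope.

Lemma Mmon_eq a : Mmon n a = \sum_(t : (size a).-tuple 'I_n | sorted ltO t) 'X_[mt t a].
Proof. by apply: eq_bigr => t _; rewrite mprodXnE. Qed.

Lemma Mmon_coef a m : is_comp a -> (Mmon n a)@_m = (flat m == a)%:R.
Proof.
move=> Ha; rewrite Mmon_eq raddf_sum /=.
under eq_bigr do rewrite mcoeffX.
rewrite -natr_sum; congr (_ %:R).
case: (eqVneq (flat m) a) => Hfa /=.
  have Hsz : size (supp m) == size a by rewrite -size_flat Hfa.
  pose t0 : (size a).-tuple 'I_n := Tuple Hsz.
  rewrite (bigD1 t0) /=; last exact: supp_sorted.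
  have E0 : mt (supp m) a = m by rewrite -Hfa mt_supp.
  rewrite /= E0 eqxx big1 // => t /andP[Hst Hne].
  case: eqP => // E; move: Hne.
  have Et : val t = supp m by rewrite -E supp_mt // size_tuple.
  have -> : t = t0 by apply: val_inj.
  by rewrite eqxx.
rewrite big1 // => t Hst; case: eqP => // E; move: Hfa.
by rewrite -E flat_mt ?size_tuple // eqxx.
Qed.

Local Close Scope ring_scope.

Lemma flat_mb b : is_comp b -> size b <= n -> flat (mb n b) = b.
Proof.
move=> Hb Hbn.
have E1 : map val (supp (mb n b)) = iota 0 (size b).
  rewrite /supp (eq_filter (a2 := preim val (fun v => nth 0 b v != 0))); last first.
    by move=> i /=; rewrite mnmE.
  rewrite -filter_map val_enum_ord -(subnKC Hbn) iotaD filter_cat add0n.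
  rewrite (eq_in_filter (a1 := fun v => nth 0 b v != 0) (a2 := predT)); last first.
    by move=> v; rewrite mem_iota add0n => /andP[_ Hv] /=; rewrite -lt0n; apply: (all_nthP 0 Hb).
  rewrite filter_predT (eq_in_filter (a2 := pred0)) ?filter_pred0 ?cats0 //.
  by move=> v; rewrite mem_iota => /andP[Hv _] /=; rewrite nth_default.
rewrite /flat (eq_map (g := fun i : 'I_n => nth 0 b (val i))); last by move=> i; rewrite mnmE.
by rewrite (map_comp (nth 0 b) val) E1 map_nth_iota0 // take_size.
Qed.

End MmonCoef.

Section QSym.
Local Open Scope nat_scope.

Lemma count_le_bij (T : eqType) (L : seq T) (P1 P2 : pred T) (f g : T -> T) :
  uniq L -> (forall x, x \in L -> P1 x -> (f x \in L) && P2 (f x)) ->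
  (forall x, x \in L -> P1 x -> g (f x) = x) -> count P1 L <= count P2 L.
Proof.
move=> HL Hf Hg; rewrite -!size_filter.
rewrite -(size_map f); apply: uniq_leq_size.
  rewrite map_inj_in_uniq ?filter_uniq // => x y.
  rewrite !mem_filter => /andP[Px Lx] /andP[Py Ly] E.
  by rewrite -(Hg x Lx Px) -(Hg y Ly Py) E.
move=> z /mapP[x]; rewrite mem_filter => /andP[Px Lx] ->.
by rewrite mem_filter andbC Hf.
Qed.

Variable n : nat.
Variable x0 : 'I_n.

Lemma CT_relabel a (T : seq (seq 'I_n)) (f : 'I_n -> 'I_n) : is_comp a -> map size T = a ->
  {in flatten T &, forall x y, (f x < f y) = (x < y)} ->
  is_CT a (map (map f) T) = is_CT a T.
Proof.
move=> Ha Hsh Hf.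
have Hsh' : map size (map (map f) T) = a.
  by rewrite -Hsh -map_comp; apply: eq_map => r /=; rewrite size_map.
have Hcell : forall i k, cellb a i k ->
    ent (map (map f) T) i k = val (f (nth x0 (nth [::] T i) k)).
  move=> i k Hc; rewrite (ent_cell x0 Hsh' Hc) nth_map_nil // (nth_map x0) //.
  move/andP: Hc => [Hi Hk]; rewrite -Hsh in Hi Hk.
  by rewrite size_map in Hi; rewrite (nth_map [::]) in Hk.
have Hcmp : forall i k j l, cellb a i k -> cellb a j l ->
    (ent (map (map f) T) i k < ent (map (map f) T) j l) = (ent T i k < ent T j l).
  move=> i k j l Hc1 Hc2; rewrite !Hcell // (ent_cell x0 Hsh Hc1) (ent_cell x0 Hsh Hc2).
  by apply: Hf; apply: cell_in_flatten Hsh _.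
have Hpos : forall i, i < size a -> 0 < nth 0 a i.
  by move=> i Hi; apply: (all_nthP 0 Ha).
rewrite /is_CT; congr (_ && _ && _).
- rewrite all_map; apply: eq_in_all => r Hr /=; rewrite sorted_map.
  apply: (eq_in_sorted (P := mem r)); last by apply/allP.
  move=> x y Hx Hy /=; rewrite leqNgt [RHS]leqNgt Hf //;
  by apply/flattenP; exists r.
- apply: eq_in_all => i; rewrite mem_iota add0n => /andP[_ Hi].
  apply: eq_in_all => j; rewrite mem_iota add0n => /andP[_ Hj].
  by rewrite Hcmp // /cellb ?Hi ?Hj Hpos.
- apply: eq_in_all => i; rewrite mem_iota add0n => /andP[_ Hi].
  apply: eq_in_all => j; rewrite mem_iota add0n => /andP[_ Hj].
  apply: eq_in_all => k; rewrite mem_iota add0n => /andP[_ Hk].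
  case Hg: [&& i < j, k < nth 0 a i & k < nth 0 a j] => //=.
  move/and3P: Hg => [Hij Hki Hkj].
  have Ci : cellb a i k by rewrite /cellb Hi.
  have Cj : cellb a j k by rewrite /cellb Hj.
  rewrite (Hcmp j k i k) //.
  case: ifP => Hle.
    have Ci' : cellb a i k.-1 by rewrite /cellb Hi; apply: leq_ltn_trans (leq_pred k) Hki.
    by rewrite (Hcmp i k.-1 j k).
  have Cj' : cellb a j k.+1.
    by rewrite /cellb Hj; move/negbT: Hle; rewrite -ltnNge; apply: leq_ltn_trans Hki.
  by rewrite (Hcmp i k j k.+1).
Qed.

Lemma sorted_index_lt (S : seq 'I_n) x y : sorted (@ltO n) S -> x \in S -> y \in S ->
  (index x S < index y S) = (x < y).
Proof.
move=> Hs Hx Hy.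
have Hu := sorted_ltO_uniq Hs.
have Hix : index x S < size S by rewrite index_mem.
have Hiy : index y S < size S by rewrite index_mem.
have Hn := sorted_ltn_nth (@ltO_trans n) x0 Hs.
case: (ltngtP (index x S) (index y S)) => H.
- by have := Hn _ _ Hix Hiy H; rewrite /ltO !nth_index.
- have := Hn _ _ Hiy Hix H; rewrite /ltO !nth_index // => Hyx.
  by apply/esym/negbTE; rewrite -leqNgt ltnW.
- by move: (congr1 (nth x0 S) H); rewrite !nth_index // => ->; rewrite ltnn.
Qed.

Section Relabel.
Variable m : 'X_{1..n}.
Let S := supp m.
Let k := size S.

Definition phi (x : 'I_n) : 'I_n := insubd x (index x S).
Definition psi (j : 'I_n) : 'I_n := nth j S j.

Lemma Ssorted : sorted (@ltO n) S. Proof. exact: supp_sorted. Qed.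
Lemma Suniq : uniq S. Proof. exact: supp_uniq. Qed.
Lemma kn : k <= n. Proof. exact: size_supp. Qed.

Lemma val_phi x : x \in S -> val (phi x) = index x S.
Proof.
move=> Hx; rewrite val_insubd; case: ifP => // /negbT; rewrite -leqNgt => H.
by have := leq_trans kn H; rewrite leqNgt index_mem Hx.
Qed.

Lemma psi_in j : val j < k -> psi j \in S.
Proof. by move=> Hj; apply: mem_nth. Qed.

Lemma index_psi j : val j < k -> index (psi j) S = val j.
Proof. by move=> Hj; rewrite /psi index_uniq // Suniq. Qed.

Lemma psi_phi x : x \in S -> psi (phi x) = x.
Proof. by move=> Hx; rewrite /psi val_phi // nth_index. Qed.

Lemma phi_psi j : val j < k -> phi (psi j) = j.
Proof. by move=> Hj; apply: val_inj; rewrite val_phi ?psi_in // index_psi. Qed.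

Lemma phi_lt x y : x \in S -> y \in S -> (phi x < phi y) = (x < y).
Proof. by move=> Hx Hy; rewrite !val_phi // (sorted_index_lt Ssorted). Qed.

Lemma psi_lt x y : val x < k -> val y < k -> (psi x < psi y) = (x < y).
Proof.
move=> Hx Hy; rewrite -(sorted_index_lt Ssorted) ?psi_in //.
by rewrite !index_psi.
Qed.

Lemma count_flatten_vals (T : seq (seq 'I_n)) (i : 'I_n) :
  count_mem i (flatten T) = cntm T i.
Proof. by rewrite mnmE count_vals. Qed.

Lemma entries_S (T : seq (seq 'I_n)) : cntm T = m -> forall x, x \in flatten T -> x \in S.
Proof.
move=> Hc x Hx; rewrite mem_supp -Hc -count_flatten_vals -lt0n -has_count has_pred1 //.
Qed.

Lemma entries_k (T : seq (seq 'I_n)) : cntm T = mb n (flat m) ->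
  forall x, x \in flatten T -> val x < k.
Proof.
move=> Hc x Hx.
have : 0 < cntm T x by rewrite -count_flatten_vals -has_count has_pred1.
rewrite Hc mnmE => H0; case: (ltnP (val x) k) => // H.
by move: H0; rewrite nth_default // size_flat.
Qed.

Lemma cnt_phi (T : seq (seq 'I_n)) : cntm T = m -> cntm (map (map phi) T) = mb n (flat m).
Proof.
move=> Hc; have HS := entries_S Hc.
apply/mnmP => j; rewrite !mnmE count_vals -map_flatten count_map.
rewrite (eq_in_count (a2 := fun x => index x S == val j)); last first.
  by move=> x Hx /=; rewrite -val_eqE val_phi // HS.
case: (ltnP (val j) k) => Hj.
  rewrite (eq_in_count (a2 := pred1 (nth x0 S j))); last first.
    move=> x Hx /=; apply/eqP/eqP => [<-|->]; first by rewrite nth_index // HS.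
    by rewrite index_uniq // Suniq.
  by rewrite count_flatten_vals Hc /flat (nth_map x0).
rewrite nth_default ?size_flat //.
apply/eqP; rewrite -leqn0 leqNgt -has_count; apply/hasP => [[x Hx /eqP E]].
by move: (HS x Hx); rewrite -index_mem E ltnNge Hj.
Qed.

Lemma cnt_psi (T : seq (seq 'I_n)) : cntm T = mb n (flat m) -> cntm (map (map psi) T) = m.
Proof.
move=> Hc; have Hk := entries_k Hc.
apply/mnmP => i; rewrite !mnmE count_vals -map_flatten count_map.
case HiS: (i \in S).
  rewrite (eq_in_count (a2 := fun x : 'I_n => val x == index i S)); last first.
    move=> x Hx /=; apply/eqP/eqP => [<-|E]; first by rewrite index_psi // Hk.
    by rewrite /psi E nth_index.
  have Hidx : index i S < n by apply: leq_trans kn; rewrite index_mem.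
  have := count_flatten_vals T (Ordinal Hidx); rewrite Hc mnmE /= => E.
  rewrite (eq_count (a2 := pred1 (Ordinal Hidx))); last by move=> x /=; rewrite -val_eqE.
  rewrite E.
  by rewrite /flat (nth_map i) ?index_mem // nth_index.
rewrite (eq_in_count (a2 := pred0)); last first.
  move=> x Hx /=; apply/negbTE/eqP => E.
  by move: (psi_in (Hk x Hx)); rewrite E HiS.
rewrite count_pred0; apply/esym/eqP; move/negbT: HiS; by rewrite mem_supp negbK.
Qed.

Lemma QS_qsym_count g : is_comp g ->
  count (fun T => is_CT g T && (cntm T == m)) (fillings n g) =
  count (fun T => is_CT g T && (cntm T == mb n (flat m))) (fillings n g).
Proof.
move=> Hg; apply/eqP; rewrite eqn_leq; apply/andP; split.
- apply: (count_le_bij (f := map (map phi)) (g := map (map psi))).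
  + exact: uniq_fillings.
  + move=> T; rewrite mem_fillings => /eqP Hsh /andP[HCT /eqP Hc].
    have HS := entries_S Hc.
    rewrite mem_fillings cnt_phi // eqxx andbT.
    rewrite CT_relabel // ?HCT ?andbT.
      by rewrite -Hsh -map_comp; apply/eqP/eq_map => r /=; rewrite size_map.
    by move=> x y Hx Hy; apply: phi_lt; apply: HS.
  + move=> T _ /andP[_ /eqP Hc]; have HS := entries_S Hc.
    rewrite -map_comp; rewrite -[RHS]map_id; apply/eq_in_map => r Hr /=.
    rewrite -map_comp -[RHS]map_id; apply/eq_in_map => x Hx /=.
    by apply: psi_phi; apply: HS; apply/flattenP; exists r.
- apply: (count_le_bij (f := map (map psi)) (g := map (map phi))).
  + exact: uniq_fillings.
  + move=> T; rewrite mem_fillings => /eqP Hsh /andP[HCT /eqP Hc].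
    have Hk := entries_k Hc.
    rewrite mem_fillings cnt_psi // eqxx andbT.
    rewrite CT_relabel // ?HCT ?andbT.
      by rewrite -Hsh -map_comp; apply/eqP/eq_map => r /=; rewrite size_map.
    by move=> x y Hx Hy; apply: psi_lt; apply: Hk.
  + move=> T _ /andP[_ /eqP Hc]; have Hk := entries_k Hc.
    rewrite -map_comp; rewrite -[RHS]map_id; apply/eq_in_map => r Hr /=.
    rewrite -map_comp -[RHS]map_id; apply/eq_in_map => x Hx /=.
    by apply: phi_psi; apply: Hk; apply/flattenP; exists r.
Qed.

End Relabel.

Local Open Scope ring_scope.
Lemma QS_qsym g m : is_comp g -> (QS n g)@_m = (QS n g)@_(mb n (flat m)).
Proof. by move=> Hg; rewrite !QS_coef QS_qsym_count. Qed.

End QSym.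

Section Final.
Variable n : nat.
Local Open Scope ring_scope.

Definition Exp (f : {mpoly rat[n]}) := exists s c, QS_expansion f s c.

Lemma Exp0 : Exp 0.
Proof. by exists [::], (fun _ => 0); split=> //; try (move=> g; rewrite eqxx); rewrite big_nil. Qed.

Lemma ExpQS g : is_comp g -> (size g <= n)%N -> Exp (QS n g).
Proof.
move=> Hg Hgn; exists [:: g], (fun h => if h == g then 1 else 0); split=> //.
- by move=> h; rewrite inE => /eqP ->.
- by move=> h; rewrite inE; case: (h == g); rewrite ?eqxx.
- by rewrite big_seq1 eqxx scale1r.
Qed.

Lemma ExpZ r f : Exp f -> Exp (r *: f).
Proof.
move=> [s [c [Hu Hs Hc Hf]]]; exists s, (fun g => r * c g); split=> //.
- move=> g Hg; apply: Hc; apply/eqP => E; move/eqP: Hg; apply; by rewrite E mulr0.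
- by rewrite Hf scaler_sumr; apply: eq_bigr => g _; rewrite scalerA.
Qed.

Lemma sum_extend (s s' : seq (seq nat)) (c : seq nat -> rat) (F : seq nat -> {mpoly rat[n]}) :
  uniq s -> uniq s' -> {subset s <= s'} -> (forall g, c g != 0 -> g \in s) ->
  \sum_(g <- s') c g *: F g = \sum_(g <- s) c g *: F g.
Proof.
move=> Hu Hu' Hsub Hc.
rewrite (bigID (fun g => g \in s)) /=.
rewrite [X in _ + X]big1 ?addr0; last first.
  move=> g /negP Hg; case: (eqVneq (c g) 0) => [->|Hcg]; first by rewrite scale0r.
  by case: Hg; apply: Hc.
rewrite -big_filter; apply: perm_big; apply: uniq_perm => //.
  exact: filter_uniq.
by move=> g; rewrite mem_filter andb_idr // => /Hsub.
Qed.

Lemma ExpD f1 f2 : Exp f1 -> Exp f2 -> Exp (f1 + f2).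
Proof.
move=> [s1 [c1 [Hu1 Hs1 Hc1 Hf1]]] [s2 [c2 [Hu2 Hs2 Hc2 Hf2]]].
exists (undup (s1 ++ s2)), (fun g => c1 g + c2 g); split.
- exact: undup_uniq.
- by move=> g; rewrite mem_undup mem_cat => /orP[/Hs1|/Hs2].
- move=> g Hg; rewrite mem_undup mem_cat.
  case: (eqVneq (c1 g) 0) => H1; last by rewrite Hc1.
  case: (eqVneq (c2 g) 0) => H2; last by rewrite Hc2 ?orbT.
  by move: Hg; rewrite H1 H2 addr0 eqxx.
- under eq_bigr do rewrite scalerDl.
  rewrite big_split /= Hf1 Hf2.
  have Sub1 : {subset s1 <= undup (s1 ++ s2)}.
    by move=> g Hg; rewrite mem_undup mem_cat Hg.
  have Sub2 : {subset s2 <= undup (s1 ++ s2)}.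
    by move=> g Hg; rewrite mem_undup mem_cat Hg orbT.
  by rewrite (sum_extend (QS n) Hu1 (undup_uniq _) Sub1 Hc1)
     (sum_extend (QS n) Hu2 (undup_uniq _) Sub2 Hc2).
Qed.

Lemma ExpSum (I : eqType) (r : seq I) (F : I -> {mpoly rat[n]}) :
  (forall i, i \in r -> Exp (F i)) -> Exp (\sum_(i <- r) F i).
Proof.
elim: r => [|i r IH] H; first by rewrite big_nil; apply: Exp0.
rewrite big_cons; apply: ExpD; first by apply: H; rewrite inE eqxx.
by apply: IH => j Hj; apply: H; rewrite inE Hj orbT.
Qed.

Lemma ExpB f1 f2 : Exp f1 -> Exp f2 -> Exp (f1 - f2).
Proof. by move=> H1 H2; rewrite -scaleN1r; apply: ExpD => //; apply: ExpZ. Qed.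

Variable x0 : 'I_n.

Definition Bset (g : seq nat) := undup [seq flat m | m <- msupp (QS n g)].

Lemma Bset_comp g b : b \in Bset g -> is_comp b /\ (size b <= n)%N.
Proof.
rewrite mem_undup => /mapP[m _ ->]; split; first exact: flat_comp.
by rewrite size_flat size_supp.
Qed.

Lemma QS_dec g : is_comp g ->
  QS n g = \sum_(b <- Bset g) (Kc n g b)%:R *: Mmon n b.
Proof.
move=> Hg; apply/mpolyP => m; rewrite [RHS]raddf_sum /=.
have -> : \sum_(b <- Bset g) ((Kc n g b)%:R *: Mmon n b)@_m =
          \sum_(b <- Bset g) (Kc n g b)%:R * (flat m == b)%:R.
  rewrite big_seq [RHS]big_seq; apply: eq_bigr => b Hb.
  by rewrite mcoeffZ Mmon_coef //; case: (Bset_comp Hb).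
rewrite (QS_qsym x0) // QS_coef_mb.
case Hin: (flat m \in Bset g).
  rewrite (bigD1_seq (flat m)) ?undup_uniq //= eqxx mulr1 big1 ?addr0 //.
  by move=> b Hb; rewrite eq_sym (negbTE Hb) mulr0.
rewrite big_seq big1; last first.
  move=> b Hb; case: eqP => [E|]; last by rewrite mulr0.
  by move: Hin; rewrite E Hb.
rewrite -QS_coef_mb -(QS_qsym x0) //; apply/eqP; rewrite mcoeff_eq0.
apply/negP => Hm; move: Hin; rewrite mem_undup map_f //.
Qed.

Definition mu (d : nat) (a : seq nat) : nat :=
  (enc d.+1 d (lam a) * d.+1 ^ d + enc d.+1 d (rev a))%N.

Lemma size_le_sumn l : all (fun k => 0 < k)%N l -> (size l <= sumn l)%N.
Proof.
elim: l => [|x l IH] //= /andP[Hx Hl]; rewrite -addn1 addnC leq_add //; exact: IH.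
Qed.

Lemma bounded l : all (fun k => 0 < k)%N l ->
  (forall r, nth 0 l r < (sumn l).+1)%N /\ (forall r, sumn l <= r -> nth 0 l r = 0)%N.
Proof.
move=> Hl; split=> r; first by rewrite ltnS nth_le_sumn.
move=> Hr; rewrite nth_default //; exact: leq_trans (size_le_sumn Hl) Hr.
Qed.

Lemma mu_lt a b : is_comp a -> is_comp b -> revlex_gt a b -> (mu (sumn a) b < mu (sumn a) a)%N.
Proof.
move=> Ha Hb [Hs H].
have Ela : sumn (lam a) = sumn a by apply: perm_sumn; apply: lam_perm.
have Elb : sumn (lam b) = sumn a by rewrite Hs; apply: perm_sumn; apply: lam_perm.
have Era : sumn (rev a) = sumn a by rewrite sumn_rev.
have Erb : sumn (rev b) = sumn a by rewrite sumn_rev.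
have [Bla Zla] := bounded (lam_pos Ha); rewrite Ela in Bla Zla.
have [Blb Zlb] := bounded (lam_pos Hb); rewrite Elb in Blb Zlb.
have Hra : all (fun k => 0 < k)%N (rev a) by rewrite all_rev.
have Hrb' : all (fun k => 0 < k)%N (rev b) by rewrite all_rev.
have [Bra Zra] := bounded Hra; rewrite Era in Bra Zra.
have [Brb Zrb] := bounded Hrb'; rewrite Erb in Brb Zrb.
set d := sumn a in Bla Zla Blb Zlb Bra Zra Brb Zrb *.
rewrite /mu.
have Hrb : (enc d.+1 d (rev b) < d.+1 ^ d)%N by apply: enc_lt.
case: H => [L|[E L]].
  have Hl : (enc d.+1 d (lam b) < enc d.+1 d (lam a))%N by apply: enc_lex.
  have : ((enc d.+1 d (lam b)).+1 * d.+1 ^ d <= enc d.+1 d (lam a) * d.+1 ^ d)%N.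
    by rewrite leq_mul2r Hl orbT.
  rewrite mulSn. lia.
have Hr : (enc d.+1 d (rev b) < enc d.+1 d (rev a))%N by apply: enc_lex.
rewrite E ltn_add2l //.
Qed.

Lemma exist_exp N a : (mu (sumn a) a < N)%N -> is_comp a -> (size a <= n)%N -> Exp (Mmon n a).
Proof.
elim: N a => [|N IH] a // HN Ha Han.
have Hdec := QS_dec Ha.
have HK := K_diag x0 Ha Han.
have Hain : a \in Bset a.
  rewrite mem_undup; apply/mapP; exists (mb n a); last by rewrite flat_mb.
  by rewrite mcoeff_msupp QS_coef_mb HK oner_eq0.
rewrite (bigD1_seq a) ?undup_uniq //= HK scale1r in Hdec.
have -> : Mmon n a = QS n a - \sum_(b <- Bset a | b != a) (Kc n a b)%:R *: Mmon n b.
  by rewrite Hdec addrK.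
apply: ExpB; first exact: ExpQS.
rewrite -big_filter; apply: ExpSum => b'; rewrite mem_filter => /andP[Hne Hb].
case: (Bset_comp Hb) => Hbc Hbn.
case: (eqVneq (Kc n a b') 0%N) => HK0.
  by rewrite HK0 scale0r; apply: Exp0.
apply: ExpZ; apply: IH => //.
case: (K_tri Ha Hbc Hbn HK0) => [E|Hgt]; first by move: Hne; rewrite E eqxx.
have := mu_lt Ha Hbc Hgt; case: Hgt => Hs _; rewrite -Hs => Hlt.
exact: leq_trans Hlt HN.
Qed.

Lemma coef_expansion f s c b : QS_expansion f s c ->
  f@_(mb n b) = \sum_(g <- s) c g * (Kc n g b)%:R.
Proof.
move=> [_ _ _ ->]; rewrite raddf_sum /=; apply: eq_bigr => g _.
by rewrite mcoeffZ QS_coef_mb.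
Qed.

Lemma uniq_exp a s c : is_comp a -> (size a <= n)%N -> QS_expansion (Mmon n a) s c ->
  c a = 1 /\ (forall g, revlex_gt g a -> c g = 0).
Proof.
move=> Ha Han Hexp.
have Hexp' := Hexp; case: Hexp' => Hu Hs Hc _.
have HMc : forall b, is_comp b -> (size b <= n)%N -> (Mmon n a)@_(mb n b) = (b == a)%:R.
  by move=> b Hb Hbn; rewrite Mmon_coef // flat_mb.
have Hzero : forall g, revlex_gt g a -> c g = 0.
  move=> g Hg; apply: NNPP => Hcg.
  have [g0 [Hg0 [Pc Pr] Hmax]] := @max_elem _ revlex_gt
       (fun g => c g != 0 /\ revlex_gt g a) s revlex_irr (@revlex_trans)
       (ex_intro _ g (conj (Hc g (introN eqP Hcg)) (conj (introN eqP Hcg) Hg))).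
  have [Hg0c Hg0n] := Hs g0 Hg0.
  have := coef_expansion g0 Hexp; rewrite HMc //.
  have -> : (g0 == a) = false.
    by apply/negbTE/eqP => E; apply: (@revlex_irr a); rewrite -{1}E.
  rewrite (bigD1_seq g0) //= (K_diag x0) // mulr1 big1 ?addr0.
    by move=> E; move: Pc; rewrite -E eqxx.
  move=> g1 Hne.
  case: (eqVneq (c g1) 0) => [->|Hc1]; first by rewrite mul0r.
  have Hg1 := Hc g1 Hc1; have [Hg1c Hg1n] := Hs g1 Hg1.
  case: (eqVneq (Kc n g1 g0) 0%N) => [->|HK]; first by rewrite mulr0.
  case: (K_tri Hg1c Hg0c Hg0n HK) => [E|Hgt]; first by move: Hne; rewrite E eqxx.
  exfalso; apply: (Hmax g1 Hg1 (conj Hc1 (revlex_trans Hgt Pr)) Hgt).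
split=> //.
have := coef_expansion a Hexp; rewrite HMc // eqxx.
case Has: (a \in s).
  rewrite (bigD1_seq a) //= (K_diag x0) // mulr1 big1 ?addr0 //.
  move=> g Hne.
  case: (eqVneq (c g) 0) => [->|Hcg]; first by rewrite mul0r.
  have [Hgc Hgn] := Hs g (Hc g Hcg).
  case: (eqVneq (Kc n g a) 0%N) => [->|HK]; first by rewrite mulr0.
  case: (K_tri Hgc Ha Han HK) => [E|Hgt]; first by move: Hne; rewrite E eqxx.
  by rewrite Hzero // mul0r.
rewrite big_seq big1; first by move/eqP; rewrite oner_eq0.
move=> g Hg; case: (eqVneq (c g) 0) => [->|Hcg]; first by rewrite mul0r.
have [Hgc Hgn] := Hs g Hg.
case: (eqVneq (Kc n g a) 0%N) => [->|HK]; first by rewrite mulr0.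
case: (K_tri Hgc Ha Han HK) => [E|Hgt]; first by move: Has; rewrite E Hg.
by rewrite Hzero // mul0r.
Qed.

End Final.
Unset Implicit Arguments.
Local Open Scope ring_scope.

Theorem theorem5p3 (n : nat) (a : seq nat) :
  (1 <= n)%N -> is_comp a -> (size a <= n)%N ->
  (exists s c, QS_expansion (Mmon n a) s c) /\
  (forall s c, QS_expansion (Mmon n a) s c ->
     c a = 1 /\ (forall g, revlex_gt g a -> c g = 0)).
Proof.
move=> Hn Ha Han; split.
  exact: (@exist_exp n (Ordinal Hn) (mu (sumn a) a).+1).
by move=> s c; apply: (uniq_exp (Ordinal Hn)).
Qed.
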